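(* In the three-dimensional Heisenberg setting of the context, let $\gamma=\exp(z_\gamma Z)$ with $z_\gamma\neq0$, let $E>0$, $\ell\in\mathbb Z\setminus\{0\}$ and $z_0\in\mathbb R\setminus\{0\}$. There exist $u_0,v_0$ such that the spiraling magnetic geodesic with $\sigma(0)=e$ and parameters $(u_0,v_0,z_0)$ has energy $E$ and is $\gamma$-periodic with period $\omega=2\pi A\ell/z_0$ if and only if one of the following holds (writing $r=\frac{z_\gamma}{\pi A\ell}$): (1a) $E>|B|$, $1<\frac{2E}{E+B}<r$, and $z_0=-\sqrt{\frac{E^2-B^2}{r-1}}$; (1b) $E>|B|$, $1<\frac{2E}{E-B}<r$, and $z_0=+\sqrt{\frac{E^2-B^2}{r-1}}$; (2a) $0<E<B$, $\frac{2E}{E-|B|}<r<\frac{2E}{E+|B|}<1$, and $z_0=-\sqrt{\frac{E^2-B^2}{r-1}}$; (2b) $B<0$, $0<E<|B|$, $\frac{2E}{E-|B|}<r<\frac{2E}{E+|B|}<1$, and $z_0=+\sqrt{\frac{E^2-B^2}{r-1}}$; (3a) $E=B$, $\ell=\frac{z_\gamma}{\pi A}$, and $-2B<z_0<0$; (3b) $E=-B$, $\ell=\frac{z_\gamma}{\pi A}$, and $0<z_0<-2B$. In all cases the period is $\omega=2\pi A\ell/z_0$, and one may take any $u_0,v_0$ with $u_0^2+v_0^2=A(E^2-(z_0+B)^2)$.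
   Context: Let $\mathfrak h$ be the real Lie algebra with basis $X,Y,Z$ whose only nonzero bracket among basis vectors is $[X,Y]=Z$, and $H$ the simply connected three-dimensional Heisenberg group with Lie algebra $\mathfrak h$; $\exp:\mathfrak h\to H$ is a diffeomorphism with $\exp(U)\exp(V)=\exp(U+V+\tfrac12[U,V])$. Fix $A>0$; $g$ is the left-invariant metric with $\{X/\sqrt A,Y/\sqrt A,Z\}$ orthonormal. With $\{\alpha,\beta,\zeta\}$ the dual basis and $B\in\mathbb R$, the magnetic form is $\Omega=d(B\zeta)=-B\alpha\wedge\beta$; magnetic geodesics solve $\nabla_{\sigma'}\sigma'=F\sigma'$ where $g(Fu,v)=\Omega(u,v)$. The magnetic geodesics with $\sigma(0)=e$ are exactly $\sigma(t)=\exp(x(t)X+y(t)Y+z(t)Z)$ with, for parameters $(u_0,v_0,z_0)\in\mathbb R^3$: if $z_0\ne0$, $x(t)=\frac{u_0}{z_0}\sin(\frac{z_0t}{A})-\frac{v_0}{z_0}(1-\cos(\frac{z_0t}{A}))$, $y(t)=\frac{u_0}{z_0}(1-\cos(\frac{z_0t}{A}))+\frac{v_0}{z_0}\sin(\frac{z_0t}{A})$, $z(t)=(z_0+B+\frac{u_0^2+v_0^2}{2Az_0})t-\frac{u_0^2+v_0^2}{2z_0^2}\sin(\frac{z_0t}{A})$; if $z_0=0$, $x=u_0t/A$, $y=v_0t/A$, $z=Bt$. The energy is $E=|\sigma'|$, with $E^2=(u_0^2+v_0^2)/A+(z_0+B)^2$. Such a geodesic is spiraling if $z_0\neq0$ and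 $(u_0,v_0)\neq(0,0)$. For $\gamma\neq e$, $\sigma$ is $\gamma$-periodic with period $\omega\ne0$ if $\gamma\sigma(t)=\sigma(t+\omega)$ for all $t$; for a spiraling $\gamma$-periodic geodesic with $\gamma$ central, necessarily $\omega z_0=2\pi A\ell$ for some $\ell\in\mathbb Z\setminus\{0\}$. *)

(* Defs.v *)
From Stdlib Require Import Reals.
Open Scope R_scope.

(* Points of the Heisenberg group H, in exponential coordinates:
   (x,y,z) stands for exp(xX + yY + zZ). *)
Definition heis := (R * R * R)%type.

Definition heis_e : heis := (0, 0, 0).

(* exp(U)exp(V) = exp(U + V + 1/2 [U,V]), with [X,Y] = Z. *)
Definition heis_mul (p q : heis) : heis :=
  let '(x, y, z) := p in
  let '(x', y', z') := q in
  (x + x', y + y', z + z' + (x * y' - y * x') / 2).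

Definition mgeod (A B u0 v0 z0 t : R) : heis :=
  if Req_EM_T z0 0 then (u0 * t / A, v0 * t / A, B * t)
  else
    ( u0 / z0 * sin (z0 * t / A) - v0 / z0 * (1 - cos (z0 * t / A)),
      u0 / z0 * (1 - cos (z0 * t / A)) + v0 / z0 * sin (z0 * t / A),
      (z0 + B + (u0 ^ 2 + v0 ^ 2) / (2 * A * z0)) * t
        - (u0 ^ 2 + v0 ^ 2) / (2 * z0 ^ 2) * sin (z0 * t / A) ).

(* Energy E = |sigma'|, given by E^2 = (u0^2+v0^2)/A + (z0+B)^2. *)
Definition menergy (A B u0 v0 z0 : R) : R :=
  sqrt ((u0 ^ 2 + v0 ^ 2) / A + (z0 + B) ^ 2).

Definition spiraling (u0 v0 z0 : R) : Prop :=
  z0 <> 0 /\ (u0, v0) <> (0, 0).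

Definition gperiodic (A B u0 v0 z0 : R) (g : heis) (omega : R) : Prop :=
  omega <> 0 /\
  forall t : R, heis_mul g (mgeod A B u0 v0 z0 t) = mgeod A B u0 v0 z0 (t + omega).

(* Main.v *)
Require Import Defs.
From Stdlib Require Import Reals Lra Lia Psatz ZArith.
Open Scope R_scope.

Lemma sc_periodZ (x : R) (k : Z) :
  sin (x + 2 * IZR k * PI) = sin x /\ cos (x + 2 * IZR k * PI) = cos x.
Proof.
  destruct (Z_le_gt_dec 0 k) as [Hk|Hk].
  - destruct (Z_of_nat_complete k Hk) as [n ->].
    rewrite <- INR_IZR_INZ. split; [apply sin_period | apply cos_period].
  - assert (Hk' : (0 <= - k)%Z) by lia.
    destruct (Z_of_nat_complete _ Hk') as [n Hn].
    assert (E : IZR k = - INR n) by (rewrite INR_IZR_INZ, <- Hn, opp_IZR; ring).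
    rewrite E.
    replace x with ((x + 2 * - INR n * PI) + 2 * INR n * PI) at 2 4 by ring.
    rewrite sin_period, cos_period. split; reflexivity.
Qed.

Lemma div_lt_iff_pos (a d r : R) : 0 < d -> (a / d < r <-> a < r * d).
Proof.
  intros Hd. assert (H : a = a / d * d) by (field; lra).
  split; intro H1.
  - rewrite H. nra.
  - apply Rmult_lt_reg_r with d; [lra|]. rewrite <- H. lra.
Qed.
Lemma div_gt_iff_pos (a d r : R) : 0 < d -> (r < a / d <-> r * d < a).
Proof.
  intros Hd. assert (H : a = a / d * d) by (field; lra).
  split; intro H1.
  - rewrite H. nra.
  - apply Rmult_lt_reg_r with d; [lra|]. rewrite <- H. lra.
Qed.
Lemma div_lt_iff_neg (a d r : R) : d < 0 -> (a / d < r <-> r * d < a).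
Proof.
  intros Hd. assert (H : a = a / d * d) by (field; lra).
  split; intro H1.
  - rewrite H. nra.
  - apply Rmult_lt_reg_r with (-d); [lra|]. nra.
Qed.
Lemma div_gt_iff_neg (a d r : R) : d < 0 -> (r < a / d <-> a < r * d).
Proof.
  intros Hd. assert (H : a = a / d * d) by (field; lra).
  split; intro H1.
  - rewrite H. nra.
  - apply Rmult_lt_reg_r with (-d); [lra|]. nra.
Qed.

Lemma sqrt_neg_eq (c X : R) : c < 0 -> c^2 = X -> c = - sqrt X.
Proof. intros Hc HX. subst X. replace (c^2) with ((-c)*(-c)) by ring.
  rewrite sqrt_square; lra. Qed.
Lemma sqrt_pos_eq (c X : R) : 0 < c -> c^2 = X -> c = sqrt X.
Proof. intros Hc HX. subst X. replace (c^2) with (c*c) by ring.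
  rewrite sqrt_square; lra. Qed.

Lemma sqrt_back (c D r : R) : c <> 0 -> (c = sqrt (D/(r-1)) \/ c = - sqrt (D/(r-1))) ->
  (r-1)*c^2 = D.
Proof.
  intros Hc Hs. set (X := D/(r-1)) in *.
  assert (HX : 0 < X).
  { destruct (Rle_lt_dec X 0) as [h|h]; [|exact h].
    rewrite (sqrt_neg_0 X h) in Hs. lra. }
  assert (Hr : r - 1 <> 0).
  { intro h. unfold X in HX. rewrite h, Rdiv_0_r in HX. lra. }
  assert (Hc2 : c^2 = X).
  { destruct Hs as [-> | ->]; [|replace ((- sqrt X)^2) with (sqrt X ^2) by ring];
    simpl; rewrite Rmult_1_r; apply sqrt_sqrt; lra. }
  rewrite Hc2. unfold X. field. exact Hr.
Qed.

Ltac dv := solve [ apply div_lt_iff_pos; lra | apply div_gt_iff_pos; lra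
  | apply div_lt_iff_neg; lra | apply div_gt_iff_neg; lra ].

Lemma core (E B c r : R) (Q : Prop) : 0 < E -> c <> 0 -> (Q <-> r = 1) ->
  (((c+B)^2 < E^2 /\ (r-1)*c^2 = E^2-B^2) <->
       (Rabs B < E /\ 1 < 2 * E / (E + B) < r /\
          c = - sqrt ((E ^ 2 - B ^ 2) / (r - 1)))
    \/ (Rabs B < E /\ 1 < 2 * E / (E - B) < r /\
          c = sqrt ((E ^ 2 - B ^ 2) / (r - 1)))
    \/ (0 < E < B /\ 2 * E / (E - Rabs B) < r < 2 * E / (E + Rabs B) /\
          2 * E / (E + Rabs B) < 1 /\
          c = - sqrt ((E ^ 2 - B ^ 2) / (r - 1)))
    \/ (B < 0 /\ 0 < E < Rabs B /\ 2 * E / (E - Rabs B) < r < 2 * E / (E + Rabs B) /\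
          2 * E / (E + Rabs B) < 1 /\
          c = sqrt ((E ^ 2 - B ^ 2) / (r - 1)))
    \/ (E = B /\ Q /\ - 2 * B < c < 0)
    \/ (E = - B /\ Q /\ 0 < c < - 2 * B)).
Proof.
  intros HE Hc HQ. split.
  - intros [H1 H2].
    assert (Hlo : - E < c + B) by nra.
    assert (Hhi : c + B < E) by nra.
    assert (Hc2 : 0 < c^2) by (destruct (Rlt_le_dec c 0); [nra| assert (0<c) by lra; nra]).
    destruct (Rtotal_order (E^2 - B^2) 0) as [HD|[HD|HD]].
    +
      assert (Hr : r < 1) by nra.
      destruct (Rlt_le_dec 0 B) as [HB|HB].
      * assert (EB : E < B) by nra.
        rewrite Rabs_right by lra.
        assert (cneg : c < 0) by lra.
        right; right; left.
        assert (h1 : c^2 > (B-E)^2) by nra.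
        assert (h2 : c^2 < (E+B)^2) by nra.
        assert (h3 : r*(E-B) < 2*E) by nra.
        assert (h4 : r*(E+B) < 2*E) by nra.
        split; [lra|]. split; [split|split].
        -- dv.
        -- dv.
        -- dv.
        -- apply sqrt_neg_eq; [lra|]. field_simplify_eq; [lra|lra].
      * assert (EB : E < - B) by nra.
        rewrite Rabs_left1 by lra.
        assert (cpos : 0 < c) by lra.
        right; right; right; left.
        assert (h1 : c^2 > (E+B)^2) by nra.
        assert (h2 : c^2 < (E-B)^2) by nra.
        assert (h3 : r*(E+B) < 2*E) by nra.
        assert (h4 : r*(E-B) < 2*E) by nra.
        split; [lra|]. split; [lra|]. split; [split|split].
        -- dv.
        -- dv.
        -- dv.
        -- apply sqrt_pos_eq; [lra|]. field_simplify_eq; [lra|lra].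
    + assert (Hr : r = 1) by nra.
      assert (HEB : E = B \/ E = - B) by (apply Rsqr_eq; unfold Rsqr; nra).
      destruct HEB as [HEB|HEB].
      * right; right; right; right; left. split; [exact HEB|].
        split; [apply HQ; exact Hr|]. subst E. nra.
      * right; right; right; right; right. split; [exact HEB|].
        split; [apply HQ; exact Hr|]. subst E. nra.
    + assert (Hr : 1 < r) by nra.
      assert (HBa : Rabs B < E) by (apply Rabs_def1; nra).
      assert (s1 : 0 < E + B) by nra.
      assert (s2 : 0 < E - B) by nra.
      destruct (Rlt_le_dec c 0) as [cneg|cpos].
      * left. split; [exact HBa|].
        assert (h2 : c^2 < (E+B)^2) by nra.
        assert (h4 : 2*E < r*(E+B)) by nra.
        split; [split|].
        -- dv.
        -- dv.
        -- apply sqrt_neg_eq; [lra|]. field_simplify_eq; [lra|lra].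
      * right; left. split; [exact HBa|].
        assert (cpos' : 0 < c) by lra.
        assert (h2 : c^2 < (E-B)^2) by nra.
        assert (h4 : 2*E < r*(E-B)) by nra.
        split; [split|].
        -- dv.
        -- dv.
        -- apply sqrt_pos_eq; [lra|]. field_simplify_eq; [lra|lra].
  - intros H.
    assert (sq := sqrt_pos ((E ^ 2 - B ^ 2) / (r - 1))).
    destruct H as [H|[H|[H|[H|[H|H]]]]].
    + destruct H as [HBa [[h1 h2] h3]].
      assert (HB := Rabs_def2 _ _ HBa).
      assert (cneg : c < 0) by lra.
      assert (Heq : (r-1)*c^2 = E^2-B^2) by (apply sqrt_back; auto).
      apply (div_lt_iff_pos (2*E) (E + B) r) in h2; [|lra].
      split; [|exact Heq].
      assert (c + B > - E).
      { destruct (Rlt_le_dec (-E) (c+B)) as [hh|hh]; [lra|exfalso].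
        assert (r1 : 0 < r - 1) by nra.
        assert (hc : c^2 >= (E+B)^2) by nra.
        assert (hh2 : (r-1)*c^2 >= (r-1)*(E+B)^2) by nra.
        assert (hh3 : (r-1)*(E+B) > E - B) by nra.
        nra. }
      nra.
    + destruct H as [HBa [[h1 h2] h3]].
      assert (HB := Rabs_def2 _ _ HBa).
      assert (cpos : 0 < c) by lra.
      assert (Heq : (r-1)*c^2 = E^2-B^2) by (apply sqrt_back; auto).
      apply (div_lt_iff_pos (2*E) (E - B) r) in h2; [|lra].
      split; [|exact Heq].
      assert (c + B < E).
      { destruct (Rlt_le_dec (c+B) E) as [hh|hh]; [lra|exfalso].
        assert (r1 : 0 < r - 1) by nra.
        assert (hc : c^2 >= (E-B)^2) by nra.
        assert (hh2 : (r-1)*c^2 >= (r-1)*(E-B)^2) by nra.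
        assert (hh3 : (r-1)*(E-B) > E + B) by nra.
        nra. }
      nra.
    + destruct H as [[h0 h1] [[h2 h3] [h4 h5]]].
      rewrite Rabs_right in h2, h3, h4 by lra.
      assert (cneg : c < 0) by lra.
      assert (Heq : (r-1)*c^2 = E^2-B^2) by (apply sqrt_back; auto).
      apply (div_lt_iff_neg (2*E) (E - B) r) in h2; [|lra].
      apply (div_gt_iff_pos (2*E) (E + B) r) in h3; [|lra].
      split; [|exact Heq].
      assert (r1 : r < 1) by nra.
      assert (c + B < E).
      { destruct (Rlt_le_dec (c+B) E) as [hh|hh]; [lra|exfalso].
        assert (hc : c^2 <= (B-E)^2) by nra.
        assert (hh2 : (1-r)*c^2 <= (1-r)*(B-E)^2) by nra.
        nra. }
      assert (c + B > - E).
      { destruct (Rlt_le_dec (-E) (c+B)) as [hh|hh]; [lra|exfalso].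
        assert (hc : c^2 >= (E+B)^2) by nra.
        assert (hh2 : (1-r)*c^2 >= (1-r)*(E+B)^2) by nra.
        nra. }
      nra.
    + destruct H as [hB [[h0 h1] [[h2 h3] [h4 h5]]]].
      rewrite Rabs_left in h1, h2, h3, h4 by lra.
      assert (cpos : 0 < c) by lra.
      assert (Heq : (r-1)*c^2 = E^2-B^2) by (apply sqrt_back; auto).
      apply (div_lt_iff_neg (2*E) (E - - B) r) in h2; [|lra].
      apply (div_gt_iff_pos (2*E) (E + - B) r) in h3; [|lra].
      split; [|exact Heq].
      assert (r1 : r < 1) by nra.
      assert (c + B > - E).
      { destruct (Rlt_le_dec (-E) (c+B)) as [hh|hh]; [lra|exfalso].
        assert (hc : c^2 <= (E+B)^2) by nra.
        assert (hh2 : (1-r)*c^2 <= (1-r)*(E+B)^2) by nra.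
        nra. }
      assert (c + B < E).
      { destruct (Rlt_le_dec (c+B) E) as [hh|hh]; [lra|exfalso].
        assert (hc : c^2 >= (E-B)^2) by nra.
        assert (hh2 : (1-r)*c^2 >= (1-r)*(E-B)^2) by nra.
        nra. }
      nra.
    + destruct H as [h1 [h2 h3]]. apply HQ in h2. subst r E. split; nra.
    + destruct H as [h1 [h2 h3]]. apply HQ in h2. subst r E. split; nra.
Qed.

Lemma periodic_iff (A B u0 v0 z0 zg : R) (l : Z) : 0 < A -> z0 <> 0 -> IZR l <> 0 ->
  (gperiodic A B u0 v0 z0 (0,0,zg) (2*PI*A*IZR l/z0) <->
   zg = (z0 + B + (u0^2+v0^2)/(2*A*z0)) * (2*PI*A*IZR l/z0)).
Proof.
  intros HA Hz Hl. assert (HPI := PI_RGT_0).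
  assert (ang : forall t, z0 * (t + 2*PI*A*IZR l/z0) / A = z0 * t / A + 2 * IZR l * PI)
    by (intro t; field; lra).
  unfold gperiodic, mgeod. destruct (Req_EM_T z0 0) as [e|_]; [contradiction|].
  split.
  - intros [_ H]. specialize (H 0). rewrite ang in H.
    destruct (sc_periodZ (z0 * 0 / A) l) as [hs hc]. rewrite hs, hc in H.
    replace (z0 * 0 / A) with 0 in H by (field; lra). rewrite sin_0, cos_0 in H.
    cbn [heis_mul] in H. injection H as h1 h2 h3.
    lra.
  - intros H. split.
    + intro h. assert (h' : 2*PI*A*IZR l = 0).
      { replace (2*PI*A*IZR l) with ((2*PI*A*IZR l/z0)*z0) by (field; lra). rewrite h; ring. }
      apply Rmult_integral in h'. destruct h' as [h'|h']; [|contradiction].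
      apply Rmult_integral in h'. destruct h' as [h'|h']; [|lra].
      apply Rmult_integral in h'. destruct h' as [h'|h']; lra.
    + intro t. rewrite ang.
      destruct (sc_periodZ (z0 * t / A) l) as [hs hc]. rewrite hs, hc.
      cbn [heis_mul]. f_equal; [f_equal|]; try ring. rewrite H. field. lra.
Qed.

Theorem lemma4p5 (A B zg E z0 : R) (l : Z) :
  0 < A -> zg <> 0 -> 0 < E -> l <> 0%Z -> z0 <> 0 ->
  let g : heis := (0, 0, zg) in
  let omega := 2 * PI * A * IZR l / z0 in
  let r := zg / (PI * A * IZR l) in
  let cases :=
       (Rabs B < E /\ 1 < 2 * E / (E + B) < r /\
          z0 = - sqrt ((E ^ 2 - B ^ 2) / (r - 1)))
    \/ (Rabs B < E /\ 1 < 2 * E / (E - B) < r /\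
          z0 = sqrt ((E ^ 2 - B ^ 2) / (r - 1)))
    \/ (0 < E < B /\ 2 * E / (E - Rabs B) < r < 2 * E / (E + Rabs B) /\
          2 * E / (E + Rabs B) < 1 /\
          z0 = - sqrt ((E ^ 2 - B ^ 2) / (r - 1)))
    \/ (B < 0 /\ 0 < E < Rabs B /\ 2 * E / (E - Rabs B) < r < 2 * E / (E + Rabs B) /\
          2 * E / (E + Rabs B) < 1 /\
          z0 = sqrt ((E ^ 2 - B ^ 2) / (r - 1)))
    \/ (E = B /\ IZR l = zg / (PI * A) /\ - 2 * B < z0 < 0)
    \/ (E = - B /\ IZR l = zg / (PI * A) /\ 0 < z0 < - 2 * B) in
  ((exists u0 v0 : R,
      spiraling u0 v0 z0 /\ menergy A B u0 v0 z0 = E /\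
      gperiodic A B u0 v0 z0 g omega) <-> cases)
  /\
  (cases -> forall u0 v0 : R,
      u0 ^ 2 + v0 ^ 2 = A * (E ^ 2 - (z0 + B) ^ 2) ->
      spiraling u0 v0 z0 /\ menergy A B u0 v0 z0 = E /\
      gperiodic A B u0 v0 z0 g omega).
Proof.
  intros HA Hzg HE Hl Hz0 g omega r cases.
  assert (HPI := PI_RGT_0).
  assert (Hl' : IZR l <> 0) by (intro h; apply Hl; apply eq_IZR; exact h).
  assert (HP : PI * A * IZR l <> 0).
  { apply Rmult_integral_contrapositive_currified; [|exact Hl'].
    apply Rmult_integral_contrapositive_currified; lra. }
  assert (HQ : IZR l = zg / (PI * A) <-> r = 1).
  { unfold r. split; intro h.
    - rewrite h. field. repeat split; try lra; assumption.
    - assert (zg = PI * A * IZR l).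
      { replace zg with (zg / (PI * A * IZR l) * (PI * A * IZR l)) by (field; repeat split; try lra; assumption).
        rewrite h; ring. }
      rewrite H. field. repeat split; try lra; assumption. }
  assert (key : forall u0 v0, u0 ^ 2 + v0 ^ 2 = A * (E ^ 2 - (z0 + B) ^ 2) ->
            (gperiodic A B u0 v0 z0 g omega <-> (r-1)*z0^2 = E^2-B^2)).
  { intros u0 v0 Hrho. subst g omega. rewrite periodic_iff by assumption.
    rewrite Hrho.
    assert (K : (z0 + B + A * (E ^ 2 - (z0 + B) ^ 2) / (2 * A * z0)) * (2 * PI * A * IZR l / z0)
                = PI * A * IZR l * (z0^2 + E^2 - B^2) / z0^2) by (field; lra).
    rewrite K. split; intro h.
    - unfold r. rewrite h. field. repeat split; try lra; assumption.
    - assert (zg = r * (PI * A * IZR l)) by (unfold r; field; repeat split; try lra; assumption).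
      rewrite H. replace (z0^2 + E^2 - B^2) with (r * z0^2) by lra. field. exact Hz0. }
  assert (part2 : cases -> forall u0 v0 : R,
      u0 ^ 2 + v0 ^ 2 = A * (E ^ 2 - (z0 + B) ^ 2) ->
      spiraling u0 v0 z0 /\ menergy A B u0 v0 z0 = E /\
      gperiodic A B u0 v0 z0 g omega).
  { intros Hc u0 v0 Hrho.
    apply (core E B z0 r (IZR l = zg / (PI * A)) HE Hz0 HQ) in Hc.
    destruct Hc as [H1 H2].
    split; [split; [exact Hz0|]|split].
    - intro h. injection h as -> ->. nra.
    - unfold menergy. rewrite Hrho.
      replace (A * (E ^ 2 - (z0 + B) ^ 2) / A + (z0 + B) ^ 2) with (E * E) by (field; lra).
      apply sqrt_square. lra.
    - apply (key u0 v0 Hrho). exact H2. }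
  split; [split|exact part2].
  - intros (u0 & v0 & [_ Hs] & Hen & Hper).
    set (rho := u0 ^ 2 + v0 ^ 2) in *.
    assert (Hrho0 : 0 <= rho) by (unfold rho; nra).
    assert (HY : rho / A + (z0 + B) ^ 2 = E ^ 2).
    { unfold menergy in Hen. fold rho in Hen.
      assert (0 <= rho / A) by (unfold Rdiv; apply Rmult_le_pos; [lra|apply Rlt_le, Rinv_0_lt_compat; lra]).
      assert (HY0 : 0 <= rho / A + (z0 + B) ^ 2) by (pose proof (pow2_ge_0 (z0+B)); lra).
      assert (h := sqrt_sqrt _ HY0). rewrite Hen in h. rewrite <- h. ring. }
    assert (Hrho : rho = A * (E ^ 2 - (z0 + B) ^ 2)).
    { rewrite <- HY. field. lra. }
    assert (Hpos : 0 < rho).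
    { destruct (Rle_lt_dec rho 0) as [h|h]; [|exact h]. exfalso. apply Hs.
      assert (u0 = 0) by (unfold rho in h; nra). assert (v0 = 0) by (unfold rho in h; nra).
      subst; reflexivity. }
    apply (core E B z0 r (IZR l = zg / (PI * A)) HE Hz0 HQ).
    split; [nra|]. apply (key u0 v0 Hrho). exact Hper.
  - intros Hc.
    pose proof Hc as Hc'.
    apply (core E B z0 r (IZR l = zg / (PI * A)) HE Hz0 HQ) in Hc'.
    destruct Hc' as [H1 H2].
    exists (sqrt (A * (E ^ 2 - (z0 + B) ^ 2))), 0.
    apply part2; [exact Hc|].
    simpl. rewrite !Rmult_1_r, Rmult_0_l, Rplus_0_r. apply sqrt_sqrt. nra.
Qed.
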